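(* Assume only upper-bound group constraints, i.e. $\mathcal S=\{r:\ |\{u\in C_k: r(u)\le i\}|\le u_i^k\ \forall i\in[n],k\in[t]\}\neq\emptyset$. Let $F$ be a maxmin-fair distribution over $\mathcal S$ for satisfaction $A=V$. Then $F$ is generalized Lorenz-dominant: for every probability distribution $D$ over $\mathcal S$ and every $m\in[n]$, $$\sum_{j=1}^m D_{(j)}\ \le\ \sum_{j=1}^m F_{(j)},$$ where $D_{(j)}$ denotes the $j$-th smallest value among $(D[u])_{u\in\mathcal U}$.
   Context: Ranking setting: $\mathcal U=\{u_1,\dots,u_n\}$ is a finite set of $n$ individuals, partitioned into groups $C_1,\dots,C_t$. $R:\mathcal U\to\mathbb R$ is a relevance function with pairwise distinct values. A ranking is a bijection $r:\mathcal U\to[n]$. The value function is $V(r,u)=f(r(u))-g(u)$, where $f:[n]\to\mathbb R$ is non-increasing and $g:\mathcal U\to\mathbb R$ satisfies $R(u)\ge R(v)\Rightarrow g(u)\ge g(v)$. The upper bounds $u_i^k$ are integers. Maxmin-fairness: for a finite nonempty set $\mathcal S$ of solutions, a finite set $\mathcal U$ and $A:\mathcal S\times\mathcal U\to\mathbb R$, for a probability distribution $D$ over $\mathcal S$ write $D[u]=\mathbb E_{S\sim D}[A(S,u)]$. A distribution $F$ over $\mathcal S$ is maxmin-fair if for every distribution $D$ over $\mathcal S$ and every $u\in\mathcal U$: if $D[u]>F[u]$ then there exists $v\in\mathcal U$ with $D[v]<F[v]\le F[u]$. *)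

(* Defs.v *)
From HB Require Import structures.
From mathcomp Require Import all_boot all_order all_algebra all_fingroup.
From mathcomp Require Import reals.
Set Implicit Arguments. Unset Strict Implicit. Unset Printing Implicit Defensive.
Import Order.TTheory GRing.Theory Num.Theory.
Local Open Scope ring_scope.

(* Individuals u_1..u_n are the elements of 'I_n.  A ranking is a bijection
   U -> [n]; we represent it by r : {perm 'I_n}, the rank of u being
   (r u).+1 \in {1,..,n}.  Groups: grp u = k means u \in C_k (k : 'I_t). *)

Definition rnk n (r : {perm 'I_n}) (u : 'I_n) : nat := (val (r u)).+1.

Definition feasible n t (grp : 'I_n -> 'I_t) (ub : nat -> 'I_t -> int)
  (r : {perm 'I_n}) : bool :=
  [forall i : 'I_n, forall k : 'I_t,
     (#|[set u | (grp u == k) && (rnk r u <= i.+1)%N]|%:Z <= ub i.+1 k)].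

Definition Vfun (R : realType) n (f : nat -> R) (g : 'I_n -> R)
  (r : {perm 'I_n}) (u : 'I_n) : R := f (rnk r u) - g u.

Definition is_distr (R : realType) (Sol : finType) (S : pred Sol)
  (D : {ffun Sol -> R}) : Prop :=
  [/\ forall s, 0 <= D s, \sum_s D s = 1 & forall s, ~~ S s -> D s = 0].

Definition expA (R : realType) (Sol U : finType) (A : Sol -> U -> R)
  (D : {ffun Sol -> R}) (u : U) : R := \sum_s D s * A s u.

Definition maxmin_fair (R : realType) (Sol U : finType) (S : pred Sol)
  (A : Sol -> U -> R) (F : {ffun Sol -> R}) : Prop :=
  is_distr S F /\
  forall D, is_distr S D -> forall u : U,
    expA A F u < expA A D u ->
    exists v : U, expA A D v < expA A F v /\ expA A F v <= expA A F u.

Definition lorenz_sum (R : realType) (Sol U : finType) (A : Sol -> U -> R)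
  (D : {ffun Sol -> R}) (m : nat) : R :=
  let s := sort <=%R [seq expA A D u | u <- enum U] in
  \sum_(j < m) nth 0 s j.

(* Main.v *)
Require Import Defs.
From HB Require Import structures.
From mathcomp Require Import all_boot all_order all_algebra all_fingroup.
From mathcomp Require Import reals.
From mathcomp Require Import zify ring lra.
Set Implicit Arguments. Unset Strict Implicit. Unset Printing Implicit Defensive.
Import Order.TTheory GRing.Theory Num.Theory.

Section Comb.
Variables (n t : nat) (grp : 'I_n -> 'I_t) (ub : nat -> 'I_t -> int).

Definition cnt (r : {perm 'I_n}) k j := \sum_x ((grp x == k) && (r x < j))%N.

Lemma feasibleP r : reflect (forall j k, (0 < j <= n)%N -> ((cnt r k j)%:Z <= ub j k)%R)
  (feasible grp ub r).
Proof.
apply: (iffP forallP) => [H j k /andP[j0 jn]|H i].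
  case: j j0 jn => // j _ jn.
  have := forallP (H (Ordinal jn)) k.
  rewrite /cnt -sum1dep_card /=.
  suff -> : (\sum_(x | (grp x == k) && (rnk r x <= j.+1)) 1 = \sum_x ((grp x == k) && (r x < j.+1)))%N by [].
  by rewrite big_mkcond; apply: eq_bigr => x _; case: (_ && _).
apply/forallP => k; have := H i.+1 k (ltn_ord i).
rewrite /cnt -sum1dep_card /=.
suff -> : (\sum_(x | (grp x == k) && (rnk r x <= i.+1)) 1 = \sum_x ((grp x == k) && (r x < i.+1)))%N by [].
by rewrite big_mkcond; apply: eq_bigr => x _; case: (_ && _).
Qed.

Lemma cnt_swap (r : {perm 'I_n}) u w k j : u != w ->
  (cnt (tperm u w * r) k j + ((grp w == k) && (r w < j)) + ((grp u == k) && (r u < j)) =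
  cnt r k j + ((grp w == k) && (r u < j)) + ((grp u == k) && (r w < j)))%N.
Proof.
move=> uw; rewrite /cnt.
have -> : (\sum_x ((grp x == k) && (((tperm u w * r)%g x) < j)) =
   \sum_x ((grp (tperm u w x) == k) && (r x < j)))%N.
  rewrite (reindex_inj (@perm_inj _ (tperm u w))) /=.
  by apply: eq_bigr => x _; rewrite permM tpermK.
have wu : w != u by rewrite eq_sym.
rewrite (bigD1 u) // (bigD1 w) //= ?tpermL ?tpermR.
rewrite [\sum_x _](bigD1 u) //= [\sum_(i | i != u) _](bigD1 w) //=.
set A := (\sum_(i | _) _)%N; set B := (\sum_(i | _) _)%N.
have -> : A = B.
  by apply: eq_bigr => x /andP[xu xw]; rewrite tpermD // eq_sym.
lia.
Qed.


Lemma swap_cnt_le (r : {perm 'I_n}) u w k j : u != w -> (r u < r w)%N ->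
  (cnt (tperm u w * r)%g k j <= cnt r k j +
     ((grp w == k) && (grp u != k) && (r u < j <= r w)))%N.
Proof.
move=> uw ruw; have := cnt_swap r k j uw.
move: (cnt _ k j) (cnt r k j) => c' c.
case: (grp w == k); case: (grp u == k) => /=;
case: (ltnP (r u) j) => Hu; case: (ltnP (r w) j) => Hw /=; lia.
Qed.

Lemma swap_same_feasible (r : {perm 'I_n}) u w : feasible grp ub r ->
  grp u = grp w -> feasible grp ub (tperm u w * r)%g.
Proof.
move=> /feasibleP H g_uw; apply/feasibleP => j k jn.
case: (eqVneq u w) => [->|uw]; first by rewrite tperm1 mul1g; apply: H.
have := cnt_swap r k j uw; rewrite g_uw => E.
move/eqP: E; rewrite [X in _ == X]addnAC !eqn_add2r => /eqP ->.
exact: H.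
Qed.

Lemma swap_feasible (r : {perm 'I_n}) u w : feasible grp ub r ->
  (r u < r w)%N -> grp u != grp w ->
  (forall j, (r u < j <= r w)%N -> ((cnt r (grp w) j).+1%:Z <= ub j (grp w))%R) ->
  feasible grp ub (tperm u w * r)%g.
Proof.
move=> /feasibleP H ruw guw Hj; apply/feasibleP => j k jn.
have uw : u != w by apply: contraNneq guw => ->.
have := swap_cnt_le k j uw ruw.
case: (boolP ((grp w == k) && (grp u != k) && (r u < j <= r w))) => HX Hle.
  move: HX => /andP[/andP[/eqP Ek _] Hr]; rewrite -Ek.
  apply: le_trans (Hj j Hr); rewrite lez_nat; rewrite -Ek in Hle; lia.
rewrite addn0 in Hle; apply: le_trans (H j k jn); rewrite lez_nat; lia.
Qed.

Variable S : {set 'I_n}.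

Definition Acnt (r : {perm 'I_n}) j := (\sum_(x in S) (r x < j))%N.
Definition ag (r : {perm 'I_n}) k j := (\sum_(x in S | grp x == k) (r x < j))%N.

Definition locopt (r : {perm 'I_n}) := forall u w, u \notin S -> w \in S ->
  (r u < r w)%N -> ~~ feasible grp ub (tperm u w * r)%g.

Lemma locopt_group r : feasible grp ub r -> locopt r ->
  forall x w, x \notin S -> w \in S -> grp x = grp w -> (r w < r x)%N.
Proof.
move=> Fr Lr x w xS wS gxw; rewrite ltnNge leq_eqVlt negb_or; apply/andP; split.
  apply/negP => /eqP/val_inj/perm_inj E; by move: xS; rewrite E wS.
by apply/negP => lt; have := Lr x w xS wS lt; rewrite swap_same_feasible.
Qed.

Lemma Acnt_le_card r j : (Acnt r j <= #|S|)%N.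
Proof. by rewrite /Acnt -sum1_card; apply: leq_sum => x _; case: (_ < _)%N. Qed.

Lemma Acnt_full r j : (n <= j)%N -> Acnt r j = #|S|.
Proof.
move=> nj; rewrite /Acnt -sum1_card; apply: eq_bigr => x _.
by rewrite (leq_trans (ltn_ord (r x)) nj).
Qed.

Lemma Acnt_succ r j (jn : (j < n)%N) :
  Acnt r j.+1 = (Acnt r j + ((r^-1)%g (Ordinal jn) \in S))%N.
Proof.
rewrite /Acnt.
have -> : (\sum_(x in S) (r x < j.+1) = \sum_(x in S) ((r x < j) + (x == (r^-1)%g (Ordinal jn))))%N.
  apply: eq_bigr => x _; rewrite ltnS leq_eqVlt.
  have -> : (x == (r^-1)%g (Ordinal jn)) = (val (r x) == j).
    apply/eqP/eqP => [->|E]; first by rewrite permKV.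
    by apply: (@perm_inj _ r); rewrite permKV; apply: val_inj.
  by case: ltngtP.
rewrite big_split /=; congr (_ + _)%N.
case: (boolP ((r^-1)%g (Ordinal jn) \in S)) => H.
  by rewrite (bigD1 _ H) /= eqxx big1 // => x /andP[_ /negbTE ->].
by apply: big1 => x xS; case: eqP => // E; move: H; rewrite -E xS.
Qed.

Lemma Acnt_part r j : Acnt r j = (\sum_k ag r k j)%N.
Proof. by rewrite /Acnt (partition_big grp predT) //. Qed.

Lemma cnt_mono r k j j' : (j <= j')%N -> (cnt r k j <= cnt r k j')%N.
Proof.
move=> jj; apply: leq_sum => x _; case: (grp x == k) => //=.
by case H: (_ < j)%N => //=; rewrite (leq_trans H jj).
Qed.

Lemma ag_le_cnt r k j : (ag r k j <= cnt r k j)%N.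
Proof.
rewrite /ag /cnt big_mkcond /=; apply: leq_sum => x _.
by case: (x \in S); case: (grp x == k).
Qed.

Lemma locopt_dom r r2 : feasible grp ub r -> locopt r -> feasible grp ub r2 ->
  forall j, (Acnt r2 j <= Acnt r j)%N.
Proof.
move=> Fr Lr Fr2; elim=> [|j IH].
  by rewrite /Acnt !big1.
case: (leqP n j) => [nj|jn].
  by rewrite (Acnt_full r (leqW nj)) Acnt_le_card.
rewrite leqNgt; apply/negP => Hlt.
set u0 := (r^-1)%g (Ordinal jn).
have ru0 : val (r u0) = j by rewrite /u0 permKV.
have u0S : u0 \notin S.
  apply/negP => H; move: Hlt; rewrite !Acnt_succ -/u0 H.
  case: (u0 \in S) in H |- * => //= Hlt. lia.
have [k Hk] : exists k, (ag r k j.+1 < ag r2 k j.+1)%N.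
  apply/existsP; move: Hlt; apply: contraLR; rewrite negb_exists => /forallP H.
  rewrite -leqNgt !Acnt_part; apply: leq_sum => k _; rewrite leqNgt; exact: H k.
have [w0 Pw0] : exists w, [&& w \in S, grp w == k & (j < r w)%N].
  apply/existsP; move: Hk; apply: contraLR; rewrite negb_exists => /forallP H.
  rewrite -leqNgt /ag; apply: (@leq_trans (\sum_(x in S | grp x == k) 1)%N).
    by apply: leq_sum => x _; case: (_ < _)%N.
  apply: leq_sum => x /andP[xS /eqP gx]; have := H x; rewrite xS gx eqxx /= -ltnNge.
  by move=> ->.
case: (@arg_minnP _ w0 (fun x => [&& x \in S, grp x == k & (j < r x)%N]) (fun x => val (r x)) Pw0) => w /and3P[wS /eqP gw jw] Hmin.
have guw : grp u0 != grp w.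
  apply/negP => /eqP E; have := locopt_group Fr Lr u0S wS E; rewrite ru0 ltnNge.
  by rewrite ltnW.
have Hnone : forall x, grp x = k -> (j < r x)%N -> (r x < r w)%N -> False.
  move=> x gx jx xw; case: (boolP (x \in S)) => xS.
    by have := Hmin x; rewrite xS gx eqxx jx /= leqNgt xw => /(_ isT).
  have := locopt_group Fr Lr xS wS; rewrite gx gw => /(_ erefl).
  by rewrite ltnNge ltnW.
have := Lr u0 w u0S wS; rewrite ru0 => /(_ jw); apply/negP/negPn.
apply: swap_feasible => //; first by rewrite ru0.
rewrite ru0 gw => j' /andP[jj' j'w].
have -> : cnt r k j' = cnt r k j.+1.
  apply: eq_bigr => x _; case: (eqVneq (grp x) k) => //= gx.
  case: (ltnP (r x) j.+1) => h1; first by rewrite (leq_trans h1 jj').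
  case h2: (r x < j')%N => //; exfalso; exact: (Hnone x gx h1 (leq_trans h2 j'w)).
have /feasibleP F2 := Fr2.
apply: le_trans (F2 j' k _); last by apply/andP; split; [exact: leq_ltn_trans (leq0n _) jj' | exact: leq_trans j'w (ltnW (ltn_ord _))].
rewrite lez_nat; apply: leq_trans (cnt_mono r2 k jj').
apply: leq_trans (ag_le_cnt r2 k j.+1); apply: leq_ltn_trans Hk.
rewrite /cnt /ag [X in (_ <= X)%N]big_mkcond /=; apply: leq_sum => x _.
case: (eqVneq (grp x) k) => gx; rewrite ?andbF ?andbT //=.
case: (boolP (x \in S)) => xS //=.
case: (ltnP (r x) j.+1) => // h1.
have := locopt_group Fr Lr xS wS; rewrite gx gw => /(_ erefl) h2.
by have := ltn_trans h2 h1; rewrite ltnS leqNgt jw.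
Qed.

Lemma exists_locopt r : feasible grp ub r ->
  exists r', [/\ feasible grp ub r', (forall w, w \in S -> (r' w <= r w)%N) & locopt r'].
Proof.
have [N] := ubnP (\sum_(w in S) val (r w))%N; elim: N r => // N IH r HN Fr.
case: (boolP [exists u, exists w, [&& u \notin S, w \in S, (r u < r w)%N &
   feasible grp ub (tperm u w * r)%g]]) => [/existsP[u /existsP[w /and4P[uS wS ruw F1]]]|H].
  have uw : u != w by apply: contraNneq uS => ->.
  have E1 : forall x, x \in S -> x != w -> (tperm u w * r)%g x = r x.
    move=> x xS xw; rewrite permM tpermD //; last by rewrite eq_sym.
    by apply: contraNneq uS => ->.
  have Hlt : (\sum_(x in S) val ((tperm u w * r)%g x) < \sum_(x in S) val (r x))%N.
    rewrite (bigD1 w) //= [X in (_ < X)%N](bigD1 w) //= permM tpermR.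
    rewrite (eq_bigr (fun x => val (r x))); first by rewrite ltn_add2r.
    by move=> x /andP[xS xw]; rewrite E1.
  have [r' [F' D' L']] := IH _ (leq_trans Hlt HN) F1.
  exists r'; split => // x xS; apply: leq_trans (D' x xS) _.
  case: (eqVneq x w) => [->|xw]; last by rewrite E1.
  by rewrite permM tpermR ltnW.
exists r; split => // u w uS wS ruw; apply/negP => F1; move/negP: H; apply.
by apply/existsP; exists u; apply/existsP; exists w; rewrite uS wS ruw F1.
Qed.

End Comb.

Local Open Scope ring_scope.

Section Abel.
Variables (R : realType) (n : nat) (f : nat -> R).
Hypothesis fdec : forall i j : nat, (1 <= i)%N -> (i <= j)%N -> (j <= n)%N -> f j <= f i.

Lemma abel_key p : (p < n)%N ->
  f p.+1 = f n + \sum_(1 <= j < n) ((p < j)%N%:R * (f j - f j.+1)).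
Proof.
move=> pn; rewrite (@big_cat_nat _ _ _ p.+1) //=.
rewrite big_nat_cond big1 ?add0r; last first.
  by move=> j /andP[/andP[_ h] _]; rewrite ltnNge -ltnS h mul0r.
rewrite big_nat_cond.
under eq_bigr => j /andP[/andP[h _] _] do rewrite h mul1r.
rewrite -big_nat_cond.
have -> : \sum_(p.+1 <= j < n) (f j - f j.+1) = - \sum_(p.+1 <= j < n) (f j.+1 - f j).
  by rewrite -sumrN; apply: eq_bigr => j _; rewrite opprB.
by rewrite telescope_sumr // opprB addrC subrK.
Qed.

Lemma abel_rewrite (S : {set 'I_n}) (r : {perm 'I_n}) :
  \sum_(w in S) f (rnk r w) =
  #|S|%:R * f n + \sum_(1 <= j < n) (f j - f j.+1) * (Acnt S r j)%:R.
Proof.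
rewrite /rnk.
under eq_bigr => w _ do rewrite (abel_key (ltn_ord (r w))).
rewrite big_split /= sumr_const mulr_natl; congr (_ + _).
rewrite exchange_big /=; apply: eq_bigr => j _.
rewrite /Acnt natr_sum mulr_sumr; apply: eq_bigr => w _; by rewrite mulrC.
Qed.

Lemma abel_le (S : {set 'I_n}) (r r2 : {perm 'I_n}) :
  (forall j, (Acnt S r2 j <= Acnt S r j)%N) ->
  \sum_(w in S) f (rnk r2 w) <= \sum_(w in S) f (rnk r w).
Proof.
move=> H; rewrite !abel_rewrite lerD2l; apply: ler_sum_nat => j /andP[j1 jn].
apply: ler_wpM2l; first by rewrite subr_ge0 fdec.
by rewrite ler_nat.
Qed.
End Abel.

Section Low.
Variables (R : realType) (T : finType) (y : T -> R).

Lemma low_set (s : seq T) (k : nat) : uniq s -> (k <= size s)%N ->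
  exists X : {set T}, [/\ #|X| = k, (forall u, u \in X -> u \in s),
    (forall u v, u \in X -> v \in s -> v \notin X -> y u <= y v) &
    \sum_(j < k) nth 0 (sort <=%R (map y s)) j = \sum_(u in X) y u].
Proof.
move=> us ks.
set zs := sort (relpre y <=%R) s.
have pz : perm_eq zs s by rewrite perm_sort.
have uz : uniq zs by rewrite sort_uniq.
have sz : size zs = size s by rewrite size_sort.
have sortz : sorted (relpre y <=%R) zs.
  by apply: sort_sorted => a b /=; apply: le_total.
have tz : transitive (relpre y <=%R) by move=> a b c /=; apply: le_trans.
have rz : reflexive (relpre y <=%R) by move=> a /=.
exists [set u | u \in take k zs]; split.
- by rewrite cardsE (card_uniqP (take_uniq k uz)) size_takel // sz.
- by move=> u; rewrite inE => /mem_take; rewrite (perm_mem pz).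
- move=> u v; rewrite !inE => ut vs vt.
  have uz' : u \in zs by apply: mem_take ut.
  have vz : v \in zs by rewrite (perm_mem pz).
  have iu := index_ltn ut.
  rewrite (in_take _ vz) -leqNgt in vt.
  have := sorted_leq_nth tz rz u sortz; rewrite /= => H.
  rewrite -(nth_index u uz') -(nth_index u vz).
  apply: H; rewrite ?inE ?index_mem //.
  by apply: ltnW; apply: leq_trans iu vt.
- rewrite sort_map -/zs.
  case: k ks => [|k] ks; first by rewrite big_ord0 (_ : take 0 zs = [::]) ?take0 // big1 // => u; rewrite inE.
  have [x0 _] : exists x0 : T, true.
    by case: (s) ks => [|a s'] //= _; exists a.
  transitivity (\sum_(u <- take k.+1 zs) y u); last first.
    rewrite big_uniq ?take_uniq //; apply: eq_bigl => u; by rewrite inE.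
  rewrite (big_nth x0) size_takel ?sz // big_mkord; apply: eq_bigr => j _.
  rewrite (nth_map x0) ?sz ?(leq_trans (ltn_ord j)) // nth_take //.
Qed.
Lemma dc (A B : {set T}) : (forall a b, a \in A -> b \in B -> y a <= y b) ->
  #|B|%:R * \sum_(a in A) y a <= #|A|%:R * \sum_(b in B) y b.
Proof.
move=> H; rewrite !mulr_sumr.
apply: (@le_trans _ _ (\sum_(a in A) \sum_(b in B) y b)).
  apply: ler_sum => a aA; rewrite mulr_natl -sumr_const.
  by apply: ler_sum => b bB; apply: H.
rewrite exchange_big /=; apply: ler_sum => b bB.
by rewrite sumr_const mulr_natl.
Qed.

Lemma low_le (X Y : {set T}) : #|X| = #|Y| ->
  (forall u v, u \in X -> v \notin X -> y u <= y v) ->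
  \sum_(u in X) y u <= \sum_(u in Y) y u.
Proof.
move=> cXY H.
rewrite (big_setID Y) [X in _ <= X](big_setID X) /= setIC lerD2l.
have cA : #|X :\: Y| = #|Y :\: X|.
  by have := cardsID Y X; have := cardsID X Y; rewrite setIC; lia.
have := dc (A := X :\: Y) (B := Y :\: X).
rewrite cA => /(_ _) Hd.
have {Hd} Hd : #|Y :\: X|%:R * \sum_(a in X :\: Y) y a <= #|Y :\: X|%:R * \sum_(b in Y :\: X) y b.
  apply: Hd => a b; rewrite !inE => /andP[_ aX] /andP[bX _]; exact: H.
case: (posnP #|Y :\: X|) => [c0|cp].
  have : #|X :\: Y| == 0%N by rewrite cA c0.
  rewrite cards_eq0 => /eqP ->; move/eqP: c0; rewrite cards_eq0 => /eqP ->.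
  by rewrite !big_set0.
by rewrite -(ler_pM2l (x := #|Y :\: X|%:R)) // ltr0n.
Qed.

Lemma avg (Y : {set T}) (k : nat) : (k <= #|Y|)%N ->
  exists X : {set T}, [/\ X \subset Y, #|X| = k &
    #|Y|%:R * \sum_(u in X) y u <= k%:R * \sum_(u in Y) y u].
Proof.
move=> kY.
have kY' : (k <= size (enum Y))%N by rewrite -cardE.
have [X [cX XY Hlow _]] := @low_set (enum Y) k (enum_uniq _) kY'.
have sXY : X \subset Y by apply/subsetP => u /XY; rewrite mem_enum.
exists X; split => //.
have Hd := dc (A := X) (B := Y :\: X).
have {Hd} Hd : #|Y :\: X|%:R * \sum_(a in X) y a <= #|X|%:R * \sum_(b in Y :\: X) y b.
  apply: Hd => a b aX; rewrite !inE => /andP[bX bY]; apply: Hlow => //.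
  by rewrite mem_enum.
have cY : #|Y| = (#|Y :\: X| + k)%N.
  by have := cardsID X Y; rewrite (setIidPr sXY) cX; lia.
rewrite [Z in _ <= _ * Z](big_setID X) /= (setIC Y X) (setIidPl sXY) cY natrD -cX mulrDl mulrDr.
by rewrite [Z in _ <= Z]addrC lerD2r.
Qed.

End Low.

Section Main.
Variables (R : realType) (n t : nat) (grp : 'I_n -> 'I_t) (ub : nat -> 'I_t -> int)
  (f : nat -> R) (g : 'I_n -> R).
Hypothesis f_noninc : forall i j : nat, (1 <= i)%N -> (i <= j)%N -> (j <= n)%N -> f j <= f i.
Hypothesis S_nonempty : exists r : {perm 'I_n}, feasible grp ub r.
Variable F : {ffun {perm 'I_n} -> R}.
Hypothesis F_fair : maxmin_fair (feasible grp ub) (Vfun f g) F.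

Local Notation V := (Vfun f g).

Lemma expA_split (X : {set 'I_n}) (D : {ffun {perm 'I_n} -> R}) :
  \sum_(w in X) expA V D w = \sum_s D s * \sum_(w in X) V s w.
Proof.
rewrite /expA exchange_big /=; apply: eq_bigr => s _; by rewrite mulr_sumr.
Qed.

Lemma tight (S : {set 'I_n}) :
  (forall u v, u \in S -> expA V F v <= expA V F u -> v \in S) ->
  forall D, is_distr (feasible grp ub) D ->
  \sum_(u in S) expA V D u <= \sum_(u in S) expA V F u.
Proof.
move=> Sdown D [D0 D1 Dsupp].
case: F_fair => [[F0 F1 Fsupp] Ffair].
pose P (r r' : {perm 'I_n}) := [&& feasible grp ub r', [forall w in S, (r' w <= r w)%N] &
  [forall r'', feasible grp ub r'' ==>
    (\sum_(w in S) f (rnk r'' w) <= \sum_(w in S) f (rnk r' w))]].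
have exP : forall r, feasible grp ub r -> exists r', P r r'.
  move=> r Fr; have [r' [F' D' L']] := exists_locopt S Fr.
  exists r'; apply/and3P; split => //.
    by apply/forall_inP => w wS; apply: D'.
  apply/forallP => r2; apply/implyP => F2.
  apply: (abel_le f_noninc); exact: (locopt_dom F' L' F2).
pose T (r : {perm 'I_n}) := odflt r [pick r' | P r r'].
have PT : forall r, feasible grp ub r -> P r (T r).
  move=> r Fr; rewrite /T; case: pickP => [r' //|H].
  by have [r' Pr'] := exP r Fr; rewrite H in Pr'.
have FT : forall r, feasible grp ub r -> feasible grp ub (T r).
  by move=> r /PT /and3P[].
pose D' := [ffun s => \sum_(r | T r == s) F r].
have Dsum : forall G : {perm 'I_n} -> R,
    \sum_s D' s * G s = \sum_r F r * G (T r).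
  move=> G; rewrite [RHS](partition_big T predT) //=.
  apply: eq_bigr => s _; rewrite ffunE mulr_suml.
  by apply: eq_bigr => r /eqP ->.
have D'd : is_distr (feasible grp ub) D'.
  split.
  - by move=> s; rewrite ffunE; apply: sumr_ge0 => r _; apply: F0.
  - have := Dsum (fun _ => 1); rewrite (eq_bigr (fun s => D' s)); last by move=> s _; rewrite mulr1.
    by move=> ->; under eq_bigr do rewrite mulr1.
  - move=> s Fs; rewrite ffunE; apply: big1 => r /eqP Trs.
    case: (boolP (feasible grp ub r)) => Fr; last by apply: Fsupp.
    by move: Fs; rewrite -Trs FT.
have [r0 Fr0] := S_nonempty.
pose M := \sum_(w in S) f (rnk (T r0) w).
have Mmax : forall s, feasible grp ub s -> \sum_(w in S) f (rnk s w) <= M.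
  move=> s Fs; have /and3P[_ _ /forallP H] := PT r0 Fr0.
  by have := H s; rewrite Fs.
have MT : forall r, feasible grp ub r -> \sum_(w in S) f (rnk (T r) w) = M.
  move=> r Fr; apply/le_anti; rewrite Mmax ?FT //=.
  have /and3P[_ _ /forallP H] := PT r Fr.
  by have := H (T r0); rewrite FT.
pose Gs := \sum_(w in S) g w.
have WE : forall s, \sum_(w in S) V s w = \sum_(w in S) f (rnk s w) - Gs.
  by move=> s; rewrite /Vfun sumrB.
have ED : \sum_(u in S) expA V D u <= M - Gs.
  rewrite expA_split.
  apply: (@le_trans _ _ (\sum_s D s * (M - Gs))).
    apply: ler_sum => s _; case: (boolP (feasible grp ub s)) => Fs.
      by apply: ler_wpM2l => //; rewrite WE lerD2r Mmax.
    by rewrite Dsupp // !mul0r.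
  by rewrite -mulr_suml D1 mul1r.
have ED' : \sum_(u in S) expA V D' u = M - Gs.
  rewrite expA_split Dsum.
  transitivity (\sum_r F r * (M - Gs)); last by rewrite -mulr_suml F1 mul1r.
  apply: eq_bigr => r _; case: (boolP (feasible grp ub r)) => Fr.
    by rewrite WE MT.
  by rewrite Fsupp // !mul0r.
have ge : forall w, w \in S -> expA V F w <= expA V D' w.
  move=> w wS; rewrite {2}/expA (Dsum (fun s => V s w)) /expA.
  apply: ler_sum => r _; case: (boolP (feasible grp ub r)) => Fr.
    apply: ler_wpM2l => //; rewrite /Vfun lerD2r.
    have /and3P[_ /forall_inP H _] := PT r Fr.
    apply: f_noninc => //; first by rewrite /rnk ltnS; apply: H.
    exact: ltn_ord.
  by rewrite Fsupp // !mul0r.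
rewrite leNgt; apply/negP => Hlt.
have Hlt' : \sum_(u in S) expA V F u < \sum_(u in S) expA V D' u.
  by apply: (lt_le_trans Hlt); rewrite ED'.
have /existsP[w /andP[wS Hw]] : [exists w, (w \in S) && (expA V F w < expA V D' w)].
  move: Hlt'; apply: contraLR; rewrite negb_exists => /forallP H; rewrite -leNgt.
  apply: ler_sum => u uS; have := H u; rewrite uS /= -leNgt; done.
have [v [Hv1 Hv2]] := Ffair D' D'd w Hw.
have vS : v \in S by apply: Sdown Hv2.
by move: (ge v vS); rewrite leNgt Hv1.
Qed.
Lemma lorenz_main D : is_distr (feasible grp ub) D ->
  forall m : nat, (1 <= m <= n)%N ->
    lorenz_sum V D m <= lorenz_sum V F m.
Proof.
move=> Dd m /andP[m1 mn].
set y := expA V F; set yD := expA V D.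
have szn : (m <= size (enum 'I_n))%N by rewrite size_enum_ord.
have [XF [cXF _ lowF sumF]] := low_set y (enum_uniq 'I_n) szn.
have [XD [cXD _ lowD sumD]] := low_set yD (enum_uniq 'I_n) szn.
rewrite /lorenz_sum -/y -/yD.
rewrite sumF sumD.
have [u0 u0X] : exists u0, u0 \in XF.
  by apply/card_gt0P; rewrite cXF.
case: (@arg_maxP _ _ _ u0 (mem XF) y u0X) => us usX usmax.
set c := y us.
pose Sl := [set u | y u < c]; pose Se := [set u | y u <= c].
have SlX : Sl \subset XF.
  apply/subsetP => u; rewrite inE => yu; apply/negPn/negP => uX.
  by have := lowF us u usX (mem_enum _ _) uX; rewrite leNgt yu.
have XSe : XF \subset Se by apply/subsetP => u uX; rewrite inE; apply: usmax.
have SlSe : Sl \subset Se by apply/subsetP => u; rewrite !inE => /ltW.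
have tSl := tight (S := Sl) _ Dd.
have tSe := tight (S := Se) _ Dd.
have {tSl} tSl : \sum_(u in Sl) yD u <= \sum_(u in Sl) y u.
  apply: tSl => u v; rewrite !inE => h1 h2; exact: le_lt_trans h2 h1.
have {tSe} tSe : \sum_(u in Se) yD u <= \sum_(u in Se) y u.
  apply: tSe => u v; rewrite !inE => h1 h2; exact: le_trans h2 h1.
pose Y := Se :\: Sl.
have yY : forall u, u \in Y -> y u = c.
  by move=> u; rewrite !inE => /andP[h1 h2]; apply/le_anti; rewrite h2 leNgt h1.
have sumXF : \sum_(u in XF) y u = \sum_(u in Sl) y u + c *+ #|XF :\: Sl|.
  rewrite (big_setID Sl) /= (setIidPr SlX); congr (_ + _).
  rewrite -sumr_const; apply: eq_bigr => u uX; apply: yY.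
  move: uX; rewrite !inE => /andP[-> uX]; exact: usmax.
have sumSe : forall z : 'I_n -> R, \sum_(u in Se) z u = \sum_(u in Sl) z u + \sum_(u in Y) z u.
  by move=> z; rewrite (big_setID Sl) /= (setIidPr SlSe).
have cm : #|XF| = (#|Sl| + #|XF :\: Sl|)%N.
  by have := cardsID Sl XF; rewrite (setIidPr SlX).
set kk := #|XF :\: Sl|.
have kkY : (kk <= #|Y|)%N.
  apply: subset_leq_card; apply/subsetP => u; rewrite !inE => /andP[-> uX].
  exact: usmax.
have kk1 : (0 < kk)%N.
  apply/card_gt0P; exists us; rewrite !inE /c ltxx /=; exact: usX.
have [X' [X'Y cX' avgX']] := avg yD kkY.
pose X := Sl :|: X'.
have X'Sl : X' :\: Sl = X'.
  apply/setDidPl; rewrite disjoints_subset; apply/subsetP => u uX'.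
  by have := subsetP X'Y u uX'; rewrite !inE => /andP[h _].
have sumX : \sum_(u in X) yD u = \sum_(u in Sl) yD u + \sum_(u in X') yD u.
  rewrite (big_setID Sl) /= /X setUK setDUl setDv set0U X'Sl //.
have cX : #|X| = m.
  have := cardsID Sl X; rewrite /X setUK setDUl setDv set0U X'Sl cX' -cXF cm.
  by move=> <-.
have LD : \sum_(u in XD) yD u <= \sum_(u in X) yD u.
  apply: low_le; first by rewrite cX cXD.
  by move=> u v uX vX; apply: lowD => //; rewrite mem_enum.
apply: le_trans LD _; rewrite sumX sumXF.
move: tSe; rewrite !sumSe.
have -> : \sum_(u in Y) y u = c *+ #|Y|.
  by rewrite -sumr_const; apply: eq_bigr => u /yY.
move: avgX' tSl.
move: (\sum_(u in Sl) yD u) (\sum_(u in Sl) y u) (\sum_(u in X') yD u) (\sum_(u in Y) yD u) => a b x z.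
rewrite -(mulr_natr c #|Y|) -(mulr_natr c kk).
have hK : (1 <= kk%:R :> R) by rewrite ler1n.
have hKD : (kk%:R <= #|Y|%:R :> R) by rewrite ler_nat.
move: (kk%:R) (#|Y|%:R) hK hKD => K Dn hK hKD h3 h4 h5.
have hD : 0 < Dn by apply: lt_le_trans hKD; apply: lt_le_trans hK; exact: ltr01.
have e1 : K * z <= K * (b + c * Dn - a).
  by apply: ler_wpM2l; [apply: le_trans hK; exact: ler01 | lra].
have e2 : (Dn - K) * a <= (Dn - K) * b.
  by apply: ler_wpM2l; [rewrite subr_ge0 | ].
rewrite -(ler_pM2l hD).
lra.
Qed.
End Main.

Theorem theorem2 (R : realType) (n t : nat) (grp : 'I_n -> 'I_t)
  (ub : nat -> 'I_t -> int)
  (rel : 'I_n -> R) (rel_inj : injective rel)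
  (f : nat -> R)
  (f_noninc : forall i j : nat, (1 <= i)%N -> (i <= j)%N -> (j <= n)%N -> f j <= f i)
  (g : 'I_n -> R)
  (g_mono : forall u v : 'I_n, rel v <= rel u -> g v <= g u)
  (S_nonempty : exists r : {perm 'I_n}, feasible grp ub r)
  (F : {ffun {perm 'I_n} -> R})
  (F_fair : maxmin_fair (feasible grp ub) (Vfun f g) F) :
  forall D : {ffun {perm 'I_n} -> R}, is_distr (feasible grp ub) D ->
  forall m : nat, (1 <= m <= n)%N ->
    lorenz_sum (Vfun f g) D m <= lorenz_sum (Vfun f g) F m.
Proof.
move=> D Dd m Hm.
exact: (lorenz_main f_noninc S_nonempty F_fair Dd Hm).
Qed.
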